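(* Let $\Sigma=(\sigma_0,\sigma_\infty,\sigma_1,\tau)$ be a special admissible 4-tuple in $S_{2n}^4$ such that $\sigma_1\tau$ is a product of $n-3$ disjoint transpositions and a disjoint 3-cycle. Then there exist integers $h,k$ with $1\le h\le n-2$, $h<k<2n-h$ and $h\equiv k\pmod 2$ such that $\sigma_0=\prod_{i=1}^{h}(i,2n+1-i)\prod_{j=1}^{(k-h)/2}(h+j,k+1-j)\prod_{t=1}^{(2n-h-k)/2}(k+t,2n-h+1-t)$ and $\sigma_1\tau=\prod_{i=1}^{h-1}(i,2n-i)\prod_{j=1}^{(k-h)/2-1}(h+j,k-j)\prod_{t=1}^{(2n-h-k)/2-1}(k+t,2n-h-t)\,\cdot(2n-h,\,h,\,k)$. In particular $\sigma_1\tau$ fixes exactly the three indices $2n$, $(k+h)/2$ and $(2n-h+k)/2$. Moreover, for each such $(h,k)$ there are exactly three special tuples with these $\sigma_0$ and $\sigma_1\tau$, corresponding to $\tau\in\{(h,k),(h,2n-h),(k,2n-h)\}$.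
   Context: Permutation products are read left to right ($\sigma\sigma'$: first $\sigma$, then $\sigma'$); $(a,b,c)$ denotes the cycle $a\mapsto b\mapsto c\mapsto a$. An admissible 4-tuple is $(\sigma_0,\sigma_\infty,\sigma_1,\tau)\in S_{2n}^4$ with $\sigma_0$ a product of $n$ disjoint transpositions, $\sigma_\infty$ a $2n$-cycle, $\sigma_1$ a product of $n-2$ disjoint transpositions, $\tau$ a transposition, and $\sigma_0\sigma_\infty\sigma_1\tau=\mathrm{id}$. It is special if $\sigma_\infty=(2n,2n-1,\dots,1)$ and $\sigma_1(2n)=\tau(2n)=2n$. *)

(* Defs.v *)
(* Permutations of {1,...,N} are modelled as {perm 'I_N};
   the label of x : 'I_N is (val x).+1.  MathComp's product of permutations
   is read left to right: (s * t) x = t (s x), matching the paper. *)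
From mathcomp Require Import all_boot all_order all_fingroup.


Unset Printing Implicit Defensive.


Definition lbl {N : nat} (x : 'I_N) : nat := (val x).+1.

(* the transposition (a,b) of labels a b in {1..N} (identity if out of range) *)
Definition tp {N : nat} (a b : nat) : {perm 'I_N} :=
  match @insub _ (fun i => i < N) _ a.-1, @insub _ (fun i => i < N) _ b.-1 with
  | Some x, Some y => tperm x y
  | _, _ => 1%g
  end.

(* the 3-cycle (a,b,c) : a |-> b |-> c |-> a  (on points) *)
Definition cyc3 {N : nat} (a b c : 'I_N) : {perm 'I_N} := (tperm a b * tperm a c)%g.

Definition tc {N : nat} (a b c : nat) : {perm 'I_N} :=
  match @insub _ (fun i => i < N) _ a.-1, @insub _ (fun i => i < N) _ b.-1,
        @insub _ (fun i => i < N) _ c.-1 with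
  | Some x, Some y, Some z => cyc3 x y z
  | _, _, _ => 1%g
  end.

Definition prod_disj_transp {N : nat} (k : nat) (s : {perm 'I_N}) : Prop :=
  exists ps : seq ('I_N * 'I_N),
    size ps = k /\ uniq (flatten [seq [:: p.1; p.2] | p <- ps]) /\
    s = (\prod_(p <- ps) tperm p.1 p.2)%g.

Definition prod_disj_transp_3cycle {N : nat} (k : nat) (s : {perm 'I_N}) : Prop :=
  exists (ps : seq ('I_N * 'I_N)) (a b c : 'I_N),
    size ps = k /\ uniq (flatten [seq [:: p.1; p.2] | p <- ps] ++ [:: a; b; c]) /\
    s = ((\prod_(p <- ps) tperm p.1 p.2)%g * cyc3 a b c)%g.

Definition is_kcycle {N : nat} (k : nat) (s : {perm 'I_N}) : Prop :=
  exists x : 'I_N, #|porbit s x| = k /\ (forall y, y \notin porbit s x -> s y = y).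

Definition is_transposition {N : nat} (t : {perm 'I_N}) : Prop :=
  exists x y : 'I_N, x != y /\ t = tperm x y.

Definition admissible (n : nat) (s0 sinf s1 t : {perm 'I_(2 * n)}) : Prop :=
  [/\ prod_disj_transp n s0, is_kcycle (2 * n) sinf, prod_disj_transp (n - 2) s1,
      is_transposition t & (s0 * sinf * s1 * t = 1)%g].

(* special: sinf = (2n, 2n-1, ..., 1) and s1, t fix 2n *)
Definition special (n : nat) (s0 sinf s1 t : {perm 'I_(2 * n)}) : Prop :=
  [/\ forall x, lbl (sinf x) = (if lbl x == 1 then 2 * n else (lbl x).-1),
      forall x, lbl x = 2 * n -> s1 x = x
    & forall x, lbl x = 2 * n -> t x = x].

Definition special_admissible (n : nat) (s0 sinf s1 t : {perm 'I_(2 * n)}) : Prop :=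
  admissible n s0 sinf s1 t /\ special n s0 sinf s1 t.

Definition P0 (n h k : nat) : {perm 'I_(2 * n)} :=
  ((\prod_(1 <= i < h.+1) tp i (2 * n + 1 - i)) *
   (\prod_(1 <= j < ((k - h) %/ 2).+1) tp (h + j) (k + 1 - j)) *
   (\prod_(1 <= t < ((2 * n - h - k) %/ 2).+1) tp (k + t) (2 * n - h + 1 - t)))%g.

Definition P1 (n h k : nat) : {perm 'I_(2 * n)} :=
  ((\prod_(1 <= i < h) tp i (2 * n - i)) *
   (\prod_(1 <= j < (k - h) %/ 2) tp (h + j) (k - j)) *
   (\prod_(1 <= t < (2 * n - h - k) %/ 2) tp (k + t) (2 * n - h - t)) *
   tc (2 * n - h) h k)%g.

(* Main.v *)
Require Import Defs.
From mathcomp Require Import all_boot all_order all_fingroup.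
From mathcomp Require Import zify.

Lemma tpermE' (T : finType) (x y z : T) :
  tperm x y z = if z == x then y else if z == y then x else z.
Proof.
case: tpermP => [->|->|/eqP h1 /eqP h2]; rewrite ?eqxx //.
  by case: eqP => // ->.
by rewrite (negbTE h1) (negbTE h2).
Qed.

Lemma lbl_inj N : injective (@lbl N).
Proof. by move=> x y [] /val_inj. Qed.

Lemma lbl_tp N a b (y : 'I_N) : 0 < a <= N -> 0 < b <= N ->
  lbl (tp a b y) = if lbl y == a then b else if lbl y == b then a else lbl y.
Proof.
move=> /andP[a0 aN] /andP[b0 bN]; rewrite /tp.
case: insubP => [x _ ex|]; last by move=> /negP[]; lia.
case: insubP => [z _ ez|]; last by move=> /negP[]; lia.
rewrite tpermE'.
have E1 : (y == x) = (lbl y == a).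
  by rewrite /lbl -(inj_eq val_inj) ex -eqSS prednK.
have E2 : (y == z) = (lbl y == b).
  by rewrite /lbl -(inj_eq val_inj) ez -eqSS prednK.
rewrite E1 E2; case: ifP => _; first by rewrite /lbl ez prednK.
by case: ifP => _; rewrite // /lbl ex prednK.
Qed.

Lemma ladder_eval N p q m (x : 'I_N) : p + 2*m < q -> q <= N.+1 ->
  lbl ((\prod_(1 <= i < m.+1) tp (p+i) (q-i))%g x) =
  if (p < lbl x <= p + m) || (q - m <= lbl x < q) then p + q - lbl x else lbl x.
Proof.
elim: m => [|m IH] h1 h2.
  rewrite big_geq // perm1; case: ifP => //; lia.
rewrite big_nat_recr //= permM lbl_tp; [|lia|lia].
rewrite IH; [|lia|lia].
have lx : lbl x <= N := ltn_ord x.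
by repeat case: ifP; move=> *; lia.
Qed.

Lemma cyc3E N (x y z w : 'I_N) : x != y -> x != z -> y != z ->
  cyc3 x y z w = if w == x then y else if w == y then z else if w == z then x else w.
Proof.
move=> xy xz yz; rewrite /cyc3 permM !tpermE'.
have yx : (y == x) = false by rewrite eq_sym (negbTE xy).
have zx : (z == x) = false by rewrite eq_sym (negbTE xz).
have zy : (z == y) = false by rewrite eq_sym (negbTE yz).
have xy' := negbTE xy; have xz' := negbTE xz; have yz' := negbTE yz.
case: (w =P x) => [E|/eqP/negbTE wx]; first by subst; rewrite ?eqxx ?yx ?zx ?zy ?xy' ?xz' ?yz'.
case: (w =P y) => [E|/eqP/negbTE wy]; first by subst; rewrite ?eqxx ?yx ?zx ?zy ?xy' ?xz' ?yz'.
case: (w =P z) => [E|/eqP/negbTE wz]; first by subst; rewrite ?eqxx ?yx ?zx ?zy ?xy' ?xz' ?yz'.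
by rewrite ?wx ?wy ?wz.
Qed.

Lemma lbl_tc N a b c (y : 'I_N) : 0 < a <= N -> 0 < b <= N -> 0 < c <= N ->
  a != b -> a != c -> b != c ->
  lbl (tc a b c y) = if lbl y == a then b else if lbl y == b then c
                     else if lbl y == c then a else lbl y.
Proof.
move=> /andP[a0 aN] /andP[b0 bN] /andP[c0 cN] ab ac bc; rewrite /tc.
case: insubP => [x _ ex|]; last by move=> /negP[]; lia.
case: insubP => [z _ ez|]; last by move=> /negP[]; lia.
case: insubP => [w _ ew|]; last by move=> /negP[]; lia.
have Ex : forall u : 'I_N, (u == x) = (lbl u == a).
  by move=> u; rewrite /lbl -(inj_eq val_inj) ex -eqSS prednK.
have Ez : forall u : 'I_N, (u == z) = (lbl u == b).
  by move=> u; rewrite /lbl -(inj_eq val_inj) ez -eqSS prednK.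
have Ew : forall u : 'I_N, (u == w) = (lbl u == c).
  by move=> u; rewrite /lbl -(inj_eq val_inj) ew -eqSS prednK.
have lx : lbl x = a by rewrite /lbl ex prednK.
have lz : lbl z = b by rewrite /lbl ez prednK.
have lw : lbl w = c by rewrite /lbl ew prednK.
rewrite cyc3E; last first.
- by rewrite Ew lz.
- by rewrite Ew lx.
- by rewrite Ez lx.
rewrite Ex Ez Ew.
by case: ifP => _; [|case: ifP => _; [|case: ifP]].
Qed.

Ltac ifdec := match goal with |- context[if ?c then _ else _] =>
  lazymatch c with context[if _ then _ else _] => fail | _ =>
  first [ rewrite (_ : c = true); [|by apply/idP; lia]
        | rewrite (_ : c = false); [|by apply/negbTE/negP; lia] ] end end.
Ltac ifdecH H := match type of H with context[if ?c then _ else _] =>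
  first [ rewrite (_ : c = true) in H; [|by apply/idP; lia]
        | rewrite (_ : c = false) in H; [|by apply/negbTE/negP; lia] ] end.

Ltac ifcase := match goal with |- context[if ?c then _ else _] =>
  case: (boolP c) => ?; try (exfalso; lia) end.

Definition f0 n h k l :=
  if l <= h then 2*n+1-l else if l <= k then h+k+1-l
  else if l <= 2*n-h then 2*n-h+k+1-l else 2*n+1-l.

Lemma ladder_eval0 N q m (x : 'I_N) : 2*m < q -> q <= N.+1 ->
  lbl ((\prod_(1 <= i < m.+1) tp i (q-i))%g x) =
  if (0 < lbl x <= m) || (q - m <= lbl x < q) then q - lbl x else lbl x.
Proof.
move=> h1 h2.
rewrite (_ : (\prod_(1 <= i < m.+1) tp i (q-i))%g = (\prod_(1 <= i < m.+1) tp (0+i) (q-i))%g);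
  last by apply: eq_bigr => i _; rewrite add0n.
by rewrite ladder_eval.
Qed.

Lemma P0_eval n h k (x : 'I_(2*n)) : 1 <= h -> h < k < 2*n - h -> h = k %[mod 2] ->
  lbl (P0 n h k x) = f0 n h k (lbl x).
Proof.
move=> h1 /andP[hk k2] hkm.
have lx : lbl x <= 2*n := ltn_ord x.
have lx0 : 0 < lbl x by [].
move: lx lx0; rewrite -/(lbl x) => lx lx0.
have e2 : k - h = 2 * ((k-h)%/2) by lia.
have e3 : 2*n-h-k = 2 * ((2*n-h-k)%/2) by lia.
rewrite /P0 !permM.
move: e2 e3; set m2 := (k-h)%/2; set m3 := (2*n-h-k)%/2 => e2 e3.
clearbody m2 m3.
set y1 := (fun_of_perm _ x).
set y2 := (fun_of_perm _ y1).
have L1 := @ladder_eval0 (2*n) (2*n+1) h x ltac:(lia) ltac:(lia).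
rewrite -/y1 in L1.
have L2 := @ladder_eval (2*n) h (k+1) m2 y1 ltac:(lia) ltac:(lia).
rewrite -/y2 in L2.
rewrite ladder_eval; [|lia|lia].
move: L1 L2; move: (lbl y1) (lbl y2) => l1 l2.
case: ifP => c1 L1; case: ifP => c2 L2; case: ifP => c3;
 rewrite /f0; repeat case: ifP; move=> *; lia.
Qed.


Lemma ladder_eval' N p q m (x : 'I_N) : 0 < m -> p + 2*(m-1) < q -> q <= N.+1 ->
  lbl ((\prod_(1 <= i < m) tp (p+i) (q-i))%g x) =
  if (p < lbl x <= p + (m-1)) || (q - (m-1) <= lbl x < q) then p + q - lbl x else lbl x.
Proof. by case: m => // m _; rewrite subn1 /=; apply: ladder_eval. Qed.

Lemma ladder_eval0' N q m (x : 'I_N) : 0 < m -> 2*(m-1) < q -> q <= N.+1 ->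
  lbl ((\prod_(1 <= i < m) tp i (q-i))%g x) =
  if (0 < lbl x <= m - 1) || (q - (m-1) <= lbl x < q) then q - lbl x else lbl x.
Proof. by case: m => // m _; rewrite subn1 /=; apply: ladder_eval0. Qed.

Definition f1 n h k l := f0 n h k (if l == 2*n then 1 else l+1).

Lemma P1_eval n h k (x : 'I_(2*n)) : 1 <= h -> h < k < 2*n - h -> h = k %[mod 2] ->
  lbl (P1 n h k x) = f1 n h k (lbl x).
Proof.
move=> h1 /andP[hk k2] hkm.
have lx : lbl x <= 2*n := ltn_ord x.
have lx0 : 0 < lbl x by [].

have e2 : k - h = 2 * ((k-h)%/2) by lia.
have e3 : 2*n-h-k = 2 * ((2*n-h-k)%/2) by lia.
rewrite /P1 !permM.
move: e2 e3; set m2 := (k-h)%/2; set m3 := (2*n-h-k)%/2 => e2 e3.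
clearbody m2 m3.
set y1 := (fun_of_perm _ x).
set y2 := (fun_of_perm _ y1).
set y3 := (fun_of_perm _ y2).
have L1 := @ladder_eval0' (2*n) (2*n) h x ltac:(lia) ltac:(lia) ltac:(lia).
rewrite -/y1 in L1.
have L2 := @ladder_eval' (2*n) h k m2 y1 ltac:(lia) ltac:(lia) ltac:(lia).
rewrite -/y2 in L2.
have L3 := @ladder_eval' (2*n) k (2*n-h) m3 y2 ltac:(lia) ltac:(lia) ltac:(lia).
rewrite -/y3 in L3.
rewrite lbl_tc; [|lia|lia|lia|lia|lia|lia].
move: L1 L2 L3; move: (lbl y1) (lbl y2) (lbl y3) => l1 l2 l3 L1 L2 L3.
rewrite /f1 /f0.
move: (lbl x) lx lx0 L1 => l lx lx0 L1.
have : l < h \/ l = h \/ h < l < h + m2 \/ l = h + m2 \/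
          h + m2 < l < k \/ l = k \/ k < l < k + m3 \/ l = k + m3 \/
          k + m3 < l < 2*n-h \/ l = 2*n-h \/ 2*n-h < l < 2*n \/ l = 2*n by lia.
by case=> [R|[R|[R|[R|[R|[R|[R|[R|[R|[R|[R|R]]]]]]]]]]];
 ifdecH L1; subst l1; ifdecH L2; subst l2; ifdecH L3; subst l3; repeat ifdec; lia.
Qed.

Lemma core n (S : nat -> nat) va vb vc :
  0 < n ->
  (forall v, v < 2*n -> S v < 2*n) ->
  (forall v, v < 2*n -> S (S v) = v) ->
  (forall v, v < 2*n -> S v <> v) ->
  S 0 = 2*n-1 ->
  va < 2*n -> vb < 2*n -> vc < 2*n -> va <> vb -> va <> vc -> vb <> vc ->
  S ((va+1) %% (2*n)) = vb -> S ((vb+1) %% (2*n)) = vc -> S ((vc+1) %% (2*n)) = va ->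
  (forall z, z < 2*n -> z <> va -> z <> vb -> z <> vc ->
     S ((S ((z+1) %% (2*n)) + 1) %% (2*n)) = z) ->
  vb <= va -> vc <= va ->
  exists h k, [/\ 1 <= h <= n-2, h < k < 2*n-h, h = k %[mod 2] &
     forall v, v < 2*n -> (S v).+1 = f0 n h k v.+1].
Proof.
move=> n0 Sr S2 S3 S0 ra rb rc ab ac bc Ha Hb Hc H5 ba ca.
have md : forall v, v < 2*n - 1 -> (v+1) %% (2*n) = v+1.
  by move=> v hv; rewrite modn_small //; lia.
have vaN : va < 2*n - 1.
  case: (ltnP va (2*n-1)) => // hv.
  have e1 : va + 1 = 2*n by lia.
  by move: Ha; rewrite e1 modnn S0; lia.
have step : forall u v, u < 2*n-1 -> 0 < v < 2*n -> S u = v ->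
    v-1 <> va -> v-1 <> vb -> v-1 <> vc -> S (u+1) = v-1.
  move=> u v hu hv Suv n1 n2 n3.
  have := H5 (v-1) ltac:(lia) n1 n2 n3.
  rewrite (_ : v - 1 + 1 = v) ?(modn_small (_ : v < 2*n)); [|lia|lia].
  have -> : S v = u by rewrite -Suv S2 //; lia.
  by rewrite md.
set h := 2*n-1-va.
have outer : forall i, i < h -> i < n -> S i = 2*n-1-i.
  elim=> [|i IH] hi hin; first by rewrite S0 subn0.
  have := step i (2*n-1-i) ltac:(lia) ltac:(lia) (IH ltac:(lia) ltac:(lia)).
  rewrite addn1 => ->; [lia|lia|lia|lia].
have hn : h < n.
  case: (ltnP h n) => // hn.
  have all : forall v, v < 2*n -> S v = 2*n-1-v.
    move=> v hv; case: (ltnP v n) => hvn; first by apply: outer; lia.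
    have e := outer (2*n-1-v) ltac:(lia) ltac:(lia).
    have := S2 (2*n-1-v) ltac:(lia).
    by rewrite e (_ : 2*n-1-(2*n-1-v) = v); [|lia].
  move: Ha Hb; rewrite md // all; last lia.
  move=> eb; rewrite -eb md; last lia.
  rewrite all; lia.
have Shm : S (h-1) = 2*n-h by rewrite outer; lia.
have ebv : vb = h-1.
  by rewrite -Ha md // (_ : va + 1 = 2*n-h); [rewrite -Shm S2; lia|lia].
set C := vc in Hb Hc H5 rc ac bc ca *.
have SC : S h = C by rewrite -Hb ebv md; [congr S; lia|lia].
have hC : h < C.
  case: (ltngtP h C) => // hC.
    have := outer C ltac:(lia) ltac:(lia).
    by rewrite -SC S2; lia.
  by move: (S3 h ltac:(lia)); rewrite SC hC.
have Cva : C < va.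
  case: (ltngtP C va) => // hC'; last by case: ac.
  have := outer (2*n-1-C) ltac:(lia) ltac:(lia).
  rewrite (_ : 2*n-1-(2*n-1-C) = C); last lia.
  move=> e; have := S2 (2*n-1-C) ltac:(lia); rewrite e.
  rewrite -SC; lia.
have SC1 : S (C+1) = va by rewrite -Hc md; lia.
have inner1 : forall j, h + j <= C - j -> S (h+j) = C - j.
  elim=> [|j IH] hj; first by rewrite addn0 subn0.
  have := step (h+j) (C-j) ltac:(lia) ltac:(lia) (IH ltac:(lia)).
  rewrite addn1 addnS => ->; [lia|lia|lia|lia].
have inner2 : forall j, C + 1 + j <= va - j -> S (C+1+j) = va - j.
  elim=> [|j IH] hj; first by rewrite addn0 subn0.
  have := step (C+1+j) (va-j) ltac:(lia) ltac:(lia) (IH ltac:(lia)).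
  move=> H; rewrite (_ : C + 1 + j.+1 = C+1+j+1) ?H; lia.
have par1 : (C - h) %% 2 = 1.
  case: (eqVneq ((C-h) %% 2) 1) => // e.
  set j := (C-h) %/ 2 - 1.
  have := step (h+j) (C-j) ltac:(lia) ltac:(lia) (inner1 j ltac:(lia)).
  move=> H; have {H} := H ltac:(lia) ltac:(lia) ltac:(lia).
  move=> H; have := S3 (h+j+1) ltac:(lia); rewrite H; lia.
have par2 : (va - C - 1) %% 2 = 1.
  case: (eqVneq ((va - C - 1) %% 2) 1) => // e.
  case: (eqVneq va (C+1)) => e1.
    by have := S3 (C+1) ltac:(lia); rewrite SC1 -e1.
  set j := (va - C - 1) %/ 2 - 1.
  have := step (C+1+j) (va-j) ltac:(lia) ltac:(lia) (inner2 j ltac:(lia)).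
  move=> H; have {H} := H ltac:(lia) ltac:(lia) ltac:(lia).
  move=> H; have := S3 (C+1+j+1) ltac:(lia); rewrite H; lia.
have eh : h = 2*n-1-va by [].
clearbody h C.
clear Ha Hb Hc H5 step md Shm SC SC1 ab ac bc ba ca ebv S0 S3 Sr.
exists h; exists C.+1; split; [lia|lia|lia|].
move=> v hv; rewrite /f0.
have [R|[R|[R|R]]] : v < h \/ h <= v <= C \/ C < v <= va \/ va < v by lia.
- rewrite outer; [|lia|lia]; repeat ifdec; lia.
- have -> : S v = h + C - v.
    case: (leqP (v - h) (C - v)) => hh.
      by have := inner1 (v-h) ltac:(lia); rewrite (_ : h + (v-h) = v); lia.
    have := inner1 (C-v) ltac:(lia).
    move=> e; have := S2 (h + (C-v)) ltac:(lia); rewrite e.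
    rewrite (_ : C - (C - v) = v); lia.
  repeat ifdec; lia.
- have -> : S v = C + 1 + va - v.
    case: (leqP (v - (C+1)) (va - v)) => hh.
      by have := inner2 (v-(C+1)) ltac:(lia); rewrite (_ : C + 1 + (v-(C+1)) = v); lia.
    have := inner2 (va-v) ltac:(lia).
    move=> e; have := S2 (C + 1 + (va-v)) ltac:(lia); rewrite e.
    rewrite (_ : va - (va - v) = v); lia.
  repeat ifdec; lia.
- have := outer (2*n-1-v) ltac:(lia) ltac:(lia).
  move=> e; have := S2 (2*n-1-v) ltac:(lia); rewrite e.
  rewrite (_ : 2*n-1-(2*n-1-v) = v); last lia.
  move=> ->; repeat ifdec; lia.
Qed.

Definition fl N (ps : seq ('I_N * 'I_N)) := flatten [seq [:: p.1; p.2] | p <- ps].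
Definition pr N (ps : seq ('I_N * 'I_N)) : {perm 'I_N} := (\prod_(p <- ps) tperm p.1 p.2)%g.
Arguments fl {N}. Arguments pr {N}.

Lemma fl_cons N p (ps : seq ('I_N * 'I_N)) : fl (p :: ps) = p.1 :: p.2 :: fl ps.
Proof. by []. Qed.

Lemma pr_cons N p (ps : seq ('I_N * 'I_N)) : pr (p :: ps) = (tperm p.1 p.2 * pr ps)%g.
Proof. by rewrite /pr big_cons. Qed.

Lemma size_fl N (ps : seq ('I_N * 'I_N)) : size (fl ps) = 2 * size ps.
Proof. elim: ps => //= p ps IH; rewrite -/(fl ps) IH; lia. Qed.

Lemma pr_fix N ps (x : 'I_N) : x \notin fl ps -> pr ps x = x.
Proof.
elim: ps => [|p ps IH]; first by rewrite /pr big_nil perm1.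
rewrite fl_cons pr_cons permM !in_cons !negb_or => /and3P[h1 h2 h3].
by rewrite tpermD 1?eq_sym // IH.
Qed.

Arguments pr_fix {N ps x}.

Lemma pr_inv N ps (x : 'I_N) : uniq (fl ps) -> pr ps (pr ps x) = x.
Proof.
elim: ps x => [|p ps IH] x; first by rewrite /pr big_nil !perm1.
rewrite fl_cons pr_cons !permM /= !in_cons !negb_or => /andP[/andP[u1 u2] /andP[u3 u4]].
have f1 := pr_fix u2; have f2 := pr_fix u3.
case: (tpermP p.1 p.2 x) => [->|->|/eqP x1 /eqP x2].
- by rewrite f2 tpermR f1.
- by rewrite f1 tpermL f2.
- have y1 : pr ps x != p.1 by apply: contra x1 => /eqP e; rewrite -f1 -e IH.
  have y2 : pr ps x != p.2 by apply: contra x2 => /eqP e; rewrite -f2 -e IH.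
  by rewrite tpermD 1?eq_sym // IH.
Qed.

Arguments pr_inv {N ps} x.

Lemma pr_moved N ps (x : 'I_N) : uniq (fl ps) -> x \in fl ps -> pr ps x != x.
Proof.
elim: ps => [|p ps IH] //.
rewrite fl_cons pr_cons !permM /= !in_cons !negb_or => /andP[/andP[u1 u2] /andP[u3 u4]].
have f1 := pr_fix u2; have f2 := pr_fix u3.
rewrite ?in_cons; case/or3P => [/eqP->|/eqP->|hx].
- by rewrite tpermL f2 eq_sym.
- by rewrite tpermR f1.
- have x1 : p.1 != x by apply: contra u2 => /eqP ->.
  have x2 : p.2 != x by apply: contra u3 => /eqP ->.
  by rewrite tpermD // IH.
Qed.

Arguments pr_moved {N ps x}.

Lemma uniq_cover (T : finType) (s : seq T) : uniq s -> size s = #|T| -> forall x, x \in s.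
Proof.
move=> us e x.
have E : #|s| = #|T| by rewrite (card_uniqP us).
by rewrite ((subset_cardP E (subset_predT _)) x).
Qed.

Lemma pdt_inv N k (s : {perm 'I_N}) : prod_disj_transp k s -> forall x, s (s x) = x.
Proof. by case=> ps [_ [u ->]] x; apply: (pr_inv x u). Qed.

Lemma pdt_nofix n (s : {perm 'I_(2*n)}) : prod_disj_transp n s -> forall x, s x != x.
Proof.
case=> ps [sz [u ->]] x; apply: (pr_moved u); apply: uniq_cover => //.
by rewrite size_fl sz card_ord.
Qed.

Lemma s'_facts N (s : {perm 'I_N}) x : (forall z, s (s z) = z) ->
  let y := s x in let s' := (tperm x y * s)%g in
  forall z, s' z = if (z == x) || (z == y) then z else s z.
Proof.
move=> inv y s' z; rewrite /s' permM.
case: (tpermP x y z) => [->|->|/eqP h1 /eqP h2]; rewrite ?eqxx ?orbT //.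
  by rewrite /y inv.
by rewrite (negbTE h1) (negbTE h2).
Qed.

Lemma inv_pdt_aux N m (s : {perm 'I_N}) : #|[set z | s z != z]| <= m ->
  (forall x, s (s x) = x) ->
  exists ps, [/\ uniq (fl ps), s = pr ps & forall z, (z \in fl ps) = (s z != z)].
Proof.
elim: m s => [|m IH] s hm inv.
  have e : s = 1%g.
    apply/permP => z; rewrite perm1; apply/eqP; apply: contraT => hz.
    have : 0 < #|[set z | s z != z]| by apply/card_gt0P; exists z; rewrite inE.
    by rewrite leqNgt in hm; rewrite (negbTE hm).
  by exists [::]; split => //; rewrite ?e /pr ?big_nil // => z; rewrite perm1 eqxx.
case: (pickP (fun z => s z != z)) => [x hx|none]; last first.
  have e : s = 1%g by apply/permP => z; rewrite perm1; apply/eqP; move: (none z) => /= /negbFE.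
  by exists [::]; split => //; rewrite ?e /pr ?big_nil // => z; rewrite perm1 eqxx.
set y := s x.
set s' := (tperm x y * s)%g.
have E : forall z, s' z = if (z == x) || (z == y) then z else s z := @s'_facts N s x inv.
have xy : x != y by rewrite eq_sym.
have inv' : forall z, s' (s' z) = z.
  move=> z; rewrite (E z); case: ifP => hz; first by rewrite E hz.
  move/negbT: hz; rewrite negb_or => /andP[zx zy].
  rewrite E; case: ifP => hw; last by rewrite inv.
  case/orP: hw => /eqP hw.
    have : z = y by rewrite -[z]inv hw.
    by move=> e; move: zy; rewrite e eqxx.
  have : z = x by apply: (@perm_inj _ s); rewrite hw.
  by move=> e; move: zx; rewrite e eqxx.
have card' : #|[set z | s' z != z]| <= m.
  have : [set z | s' z != z] \proper [set z | s z != z].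
    apply/properP; split.
      apply/subsetP => z; rewrite !inE E; case: ifP => //; by rewrite eqxx.
    by exists x; rewrite !inE ?E ?eqxx //= ?eqxx.
  move/proper_card; lia.
have [ps [u e m']] := IH s' card' inv'.
exists ((x, y) :: ps); split.
- by rewrite fl_cons /= u andbT !in_cons negb_or xy !m' !E !eqxx ?orbT //= eqxx.
- by rewrite pr_cons -e /s' mulgA tperm2 mul1g.
- move=> z; rewrite fl_cons !in_cons m' E.
  case: (eqVneq z x) => [->|zx] /=; first by rewrite hx.
  case: (eqVneq z y) => [->|zy] /=; last by [].
  by rewrite /y inv eq_sym.
Qed.

Lemma inv_pdt N k (s : {perm 'I_N}) : (forall x, s (s x) = x) ->
  2 * k = #|[set z | s z != z]| -> prod_disj_transp k s.
Proof.
move=> inv hk.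
have [ps [u e m]] := @inv_pdt_aux N _ s (leqnn _) inv.
exists ps; split; last by split.
have : size (fl ps) = #|[set z | s z != z]|.
  rewrite -(card_uniqP u); apply: eq_card => z; by rewrite inE m.
rewrite size_fl -hk; lia.
Qed.

Ltac reg12 l h k n m2 m3 :=
  have : l < h \/ l = h \/ h < l < h + m2 \/ l = h + m2 \/
          h + m2 < l < k \/ l = k \/ k < l < k + m3 \/ l = k + m3 \/
          k + m3 < l < 2*n-h \/ l = 2*n-h \/ 2*n-h < l < 2*n \/ l = 2*n;
  [lia | case=> [R|[R|[R|[R|[R|[R|[R|[R|[R|[R|[R|R]]]]]]]]]]]].

Definition tpf (a b l : nat) : nat := if l == a then b else if l == b then a else l.

Lemma f0_props n h k m2 m3 l : 1 <= h -> h < k < 2*n-h -> k - h = 2*m2 -> 2*n-h-k = 2*m3 ->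
  0 < l <= 2*n ->
  [/\ f0 n h k (f0 n h k l) = l, 0 < f0 n h k l <= 2*n & f0 n h k l != l].
Proof.
move=> h1 /andP[hk k2] e2 e3 /andP[l0 l2]; rewrite /f0.
by reg12 l h k n m2 m3; repeat ifdec; split; lia.
Qed.

Lemma f1_rot n h k y : 0 < y <= 2*n ->
  f1 n h k (if y == 1 then 2*n else y.-1) = f0 n h k y.
Proof.
move=> /andP[y0 y2]; rewrite /f1.
case: (eqVneq y 1) => [->|y1]; first by rewrite eqxx.
have -> : (y.-1 == 2*n) = false by lia.
by rewrite (_ : y.-1 + 1 = y) //; lia.
Qed.

Lemma f1_fix n h k m2 m3 l : 1 <= h -> h < k < 2*n-h -> k - h = 2*m2 -> 2*n-h-k = 2*m3 ->
  0 < l <= 2*n ->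
  (f1 n h k l = l) <-> (l = 2 * n \/ l = (k + h) %/ 2 \/ l = (2 * n - h + k) %/ 2).
Proof.
move=> h1 /andP[hk k2] e2 e3 /andP[l0 l2].
have -> : (k + h) %/ 2 = h + m2 by lia.
have -> : (2 * n - h + k) %/ 2 = k + m3 by lia.
rewrite /f1 /f0.
by reg12 l h k n m2 m3; repeat ifdec; split; lia.
Qed.

Lemma f1_3 n h k m2 m3 : 1 <= h -> h < k < 2*n-h -> k - h = 2*m2 -> 2*n-h-k = 2*m3 ->
  [/\ f1 n h k (2*n-h) = h, f1 n h k h = k & f1 n h k k = 2*n-h].
Proof.
move=> h1 /andP[hk k2] e2 e3; rewrite /f1 /f0.
by split; repeat ifdec; lia.
Qed.

Lemma g_props n h k m2 m3 a b w l : 1 <= h -> h < k < 2*n-h -> k - h = 2*m2 -> 2*n-h-k = 2*m3 ->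
  [\/ [/\ a = h, b = k & w = h], [/\ a = h, b = 2*n-h & w = 2*n-h] | [/\ a = k, b = 2*n-h & w = k]] ->
  0 < l <= 2*n ->
  [/\ tpf a b (f1 n h k (tpf a b (f1 n h k l))) = l, 0 < tpf a b (f1 n h k l) <= 2*n &
     (tpf a b (f1 n h k l) = l <-> (l = 2*n \/ l = h + m2 \/ l = k + m3 \/ l = w))].
Proof.
move=> h1 /andP[hk k2] e2 e3 C /andP[l0 l2]; rewrite /tpf /f1 /f0.
by case: C => -[-> -> ->]; reg12 l h k n m2 m3; repeat ifdec; split; lia.
Qed.

Lemma lblpt N l : 0 < l <= N -> {x : 'I_N | lbl x = l}.
Proof.
move=> /andP[l0 lN]; have H : l.-1 < N by lia.
by exists (Ordinal H); rewrite /lbl /= prednK.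
Qed.

Lemma lbl_bound N (x : 'I_N) : 0 < lbl x <= N.
Proof. exact: ltn_ord x. Qed.
Arguments lbl_bound {N} x.

Lemma lbl_eq N (x y : 'I_N) : (lbl x == lbl y) = (x == y).
Proof. by apply/eqP/eqP => [/lbl_inj|->]. Qed.

Lemma tp_tperm N a b (u v : 'I_N) : lbl u = a -> lbl v = b -> tp a b = tperm u v.
Proof.
move=> hu hv; apply/permP => z; apply: (@lbl_inj N).
have := lbl_bound u; have := lbl_bound v => bv bu.
rewrite tpermE' lbl_tp -?hu -?hv // !lbl_eq.
by case: ifP => //; case: ifP.
Qed.

Lemma P0sinfP1 n h k (sinf : {perm 'I_(2*n)}) : 1 <= h -> h < k < 2*n - h -> h = k %[mod 2] ->
  (forall x, lbl (sinf x) = (if lbl x == 1 then 2 * n else (lbl x).-1)) ->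
  (P0 n h k * sinf * P1 n h k = 1)%g.
Proof.
move=> h1 hk hm Hs; apply/permP => x.
rewrite perm1 (permM (P0 n h k * sinf)) (permM (P0 n h k)); apply: (@lbl_inj (2*n)).
have e2 : k - h = 2 * ((k-h)%/2) by lia.
have e3 : 2*n-h-k = 2 * ((2*n-h-k)%/2) by lia.
have [A B C] := @f0_props n h k _ _ (lbl x) h1 hk e2 e3 (lbl_bound x).
rewrite P1_eval // Hs P0_eval // f1_rot // A.
Qed.

Lemma kcycle_rot n (sinf : {perm 'I_(2*n)}) : 0 < n ->
  (forall x, lbl (sinf x) = (if lbl x == 1 then 2 * n else (lbl x).-1)) ->
  is_kcycle (2*n) sinf.
Proof.
move=> n0 Hs.
have [x0 hx0] := @lblpt (2*n) (2*n) ltac:(lia).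
have cl : forall j, j < 2*n -> lbl ((sinf ^+ j)%g x0) = 2*n - j.
  elim=> [|j IH] hj; first by rewrite expg0 perm1 hx0 subn0.
  rewrite expgSr permM Hs IH; last lia.
  case: ifP => ?; lia.
have E : porbit sinf x0 = setT.
  apply/setP => y; rewrite inE; apply/porbitP; exists (2*n - lbl y).
  apply: (@lbl_inj (2*n)); have := lbl_bound y => hy; rewrite cl; lia.
exists x0; rewrite E cardsT card_ord; split => // y; by rewrite inE.
Qed.

Lemma pdt3_facts N k (phi : {perm 'I_N}) : prod_disj_transp_3cycle k phi ->
  exists a b c : 'I_N, [/\ a != b, a != c, b != c,
    [/\ phi a = b, phi b = c & phi c = a] &
    forall z, z != a -> z != b -> z != c -> phi (phi z) = z].
Proof.
case=> ps [a [b [c [_ [u ->]]]]].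
move: u; rewrite -/(fl ps) cat_uniq => /and3P[u1 u2 u3].
move: u3; rewrite /= !in_cons !negb_or !in_nil !andbT => /andP[/andP[ab ac] bc].
move: u2; rewrite /= !orbF !negb_or => /and3P[na nb nc].
rewrite -/(pr ps) in u1 *.
have fa := pr_fix na; have fb := pr_fix nb; have fc := pr_fix nc.
have ca : c != a by rewrite eq_sym.
have cb : c != b by rewrite eq_sym.
have ba : b != a by rewrite eq_sym.
exists a, b, c; split => //.
  rewrite !(permM (pr ps)) fa fb fc !cyc3E // !eqxx ?(negbTE ba) ?(negbTE ca) ?(negbTE cb) //.
move=> z za zb zc; rewrite !(permM (pr ps)).
have pz : forall w, pr ps z = w -> pr ps w = w -> z = w.
  by move=> w e fw; rewrite -(pr_inv z u1) e fw.
have pza : pr ps z != a by apply: contra za => /eqP e; rewrite (pz a e fa).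
have pzb : pr ps z != b by apply: contra zb => /eqP e; rewrite (pz b e fb).
have pzc : pr ps z != c by apply: contra zc => /eqP e; rewrite (pz c e fc).
rewrite (@cyc3E N a b c (pr ps z) ab ac bc) (negbTE pza) (negbTE pzb) (negbTE pzc) pr_inv //.
by rewrite cyc3E // (negbTE za) (negbTE zb) (negbTE zc).
Qed.

Lemma trans_mem (T : finType) (P s : {perm T}) A B C x y :
  A != B -> A != C -> B != C -> P A = B -> P B = C -> P C = A ->
  (forall z, s (s z) = z) -> s = (P * tperm x y)%g -> x \in [:: A; B; C].
Proof.
move=> AB AC BC PA PB PC inv es.
have sE : forall z, s z = tperm x y (P z) by move=> z; rewrite es permM.
apply: contraT; rewrite !in_cons in_nil ?orbF !negb_or => /and3P[xA xB xC].
have BA : B != A by rewrite eq_sym. have CA : C != A by rewrite eq_sym.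
have CB : C != B by rewrite eq_sym.
case: (eqVneq y A) => [yA|yA].
  have h1 : s B = C by rewrite sE PB tpermD // ?yA // eq_sym.
  have h2 : s C = x by rewrite sE PC yA tpermR.
  by move: (inv B); rewrite h1 h2 => e; move: xB; rewrite e eqxx.
case: (eqVneq y B) => [yB|yB].
  have h1 : s C = A by rewrite sE PC tpermD // ?yB // eq_sym.
  have h2 : s A = x by rewrite sE PA yB tpermR.
  by move: (inv C); rewrite h1 h2 => e; move: xC; rewrite e eqxx.
case: (eqVneq y C) => [yC|yC].
  have h1 : s A = B by rewrite sE PA tpermD // ?yC // eq_sym.
  have h2 : s B = x by rewrite sE PB yC tpermR.
  by move: (inv A); rewrite h1 h2 => e; move: xA; rewrite e eqxx.
have h1 : s A = B by rewrite sE PA tpermD // eq_sym.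
have h2 : s B = C by rewrite sE PB tpermD // eq_sym.
by move: (inv A); rewrite h1 h2 => e; move: CA; rewrite e eqxx.
Qed.

Lemma trans_in (T : finType) (P s : {perm T}) A B C x y :
  A != B -> A != C -> B != C -> P A = B -> P B = C -> P C = A -> x != y ->
  (forall z, s (s z) = z) -> s = (P * tperm x y)%g ->
  [\/ tperm x y = tperm A B, tperm x y = tperm A C | tperm x y = tperm B C].
Proof.
move=> AB AC BC PA PB PC xy inv es.
have hx := @trans_mem _ P s A B C x y AB AC BC PA PB PC inv es.
have hy := @trans_mem _ P s A B C y x AB AC BC PA PB PC inv (etrans es (congr1 _ (tpermC x y))).
move: hx hy; rewrite !in_cons !in_nil !orbF.
by case/or3P => /eqP ex; case/or3P => /eqP ey; subst; rewrite ?eqxx in xy;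
  first [done | by apply: Or31 | by apply: Or32 | by apply: Or33
        | by rewrite tpermC; apply: Or31 | by rewrite tpermC; apply: Or32
        | by rewrite tpermC; apply: Or33].
Qed.

Lemma card_lbl_in N (L : seq nat) : uniq L -> all (fun l => 0 < l <= N) L ->
  #|[set z : 'I_N | lbl z \in L]| = size L.
Proof.
elim: L => [|l L IH] /=.
  by move=> _ _; apply/eqP; rewrite cards_eq0; apply/eqP/setP => z; rewrite !inE.
move=> /andP[lL uL] /andP[hl aL].
have [w hw] := @lblpt N l hl.
have -> : [set z : 'I_N | lbl z \in l :: L] = w |: [set z : 'I_N | lbl z \in L].
  by apply/setP => z; rewrite !inE -hw lbl_eq.
rewrite cardsU1 IH // inE hw lL //.
Qed.

Lemma part1 n (s0 sinf s1 t : {perm 'I_(2 * n)}) :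
    special_admissible n s0 sinf s1 t ->
    prod_disj_transp_3cycle (n - 3) (s1 * t)%g ->
    exists h k : nat,
      [/\ 1 <= h <= n - 2, h < k < 2 * n - h, h = k %[mod 2],
          s0 = P0 n h k /\ (s1 * t)%g = P1 n h k
        & forall x : 'I_(2 * n),
            (s1 * t)%g x = x <->
            (lbl x = 2 * n \/ lbl x = (k + h) %/ 2 \/ lbl x = (2 * n - h + k) %/ 2)].
Proof.
move=> [[H0 Hinf H1 Ht Heq] [Hs Hs1 Ht2]] H3.
have phiE : forall x, (s1 * t)%g x = t (s1 x) by move=> x; rewrite permM.
set phi := (s1 * t)%g in H3 phiE *.
have [a [b [c [ab ac bc [pa pb pc] H5]]]] := @pdt3_facts _ _ _ H3.
have n0 : 0 < n by have := ltn_ord a; lia.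
have inv0 := @pdt_inv _ _ _ H0. have nf0 := @pdt_nofix _ _ H0.
have rel : forall w, phi (sinf (s0 w)) = w.
  move=> w; have := congr1 (fun p : {perm 'I_(2*n)} => p w) Heq.
  by rewrite perm1 !permM -phiE.
pose pt v : 'I_(2*n) := insubd a v.
have vpt : forall v, v < 2*n -> val (pt v) = v.
  by move=> v hv; rewrite /pt val_insubd hv.
have ptv : forall x : 'I_(2*n), pt (val x) = x by move=> x; rewrite /pt valKd.
pose S v := val (s0 (pt v)).
have key : forall v, v < 2*n -> val (phi (pt v)) = S ((v+1) %% (2*n)).
  move=> v hv; set w := s0 (pt ((v+1) %% (2*n))).
  have e1 : sinf (s0 w) = pt v.
    rewrite /w inv0; apply: (@lbl_inj (2*n)); rewrite Hs /lbl.
    case: (ltnP (v+1) (2*n)) => hv1.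
      have e' : val (pt ((v+1) %% (2*n))) = v+1 by rewrite modn_small // vpt.
      rewrite e' vpt //; case: ifP => ?; lia.
    have e : v + 1 = 2*n by lia.
    have e' : val (pt ((v+1) %% (2*n))) = 0 by rewrite e modnn vpt //; lia.
    rewrite e' vpt //=; lia.
  by rewrite -e1 rel.
have Sr : forall v, v < 2*n -> S v < 2*n by move=> v _; exact: ltn_ord.
have S2 : forall v, v < 2*n -> S (S v) = v by move=> v hv; rewrite /S /= ptv inv0 vpt.
have S3 : forall v, v < 2*n -> S v <> v.
  move=> v hv e; have := nf0 (pt v); rewrite (_ : s0 (pt v) = pt v) ?eqxx //.
  by apply: val_inj; rewrite -/(S v) e vpt.
have S0 : S 0 = 2*n-1.
  have hl : lbl (pt (2*n-1)) = 2*n by rewrite /lbl vpt; lia.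
  have := key (2*n-1) ltac:(lia).
  rewrite (_ : 2*n-1+1 = 2*n); last lia.
  rewrite modnn => <-.
  by rewrite phiE Hs1 // Ht2 // vpt //; lia.
have Ha : S ((val a + 1) %% (2*n)) = val b by rewrite -(key _ (ltn_ord a)) ptv pa.
have Hb : S ((val b + 1) %% (2*n)) = val c by rewrite -(key _ (ltn_ord b)) ptv pb.
have Hc : S ((val c + 1) %% (2*n)) = val a by rewrite -(key _ (ltn_ord c)) ptv pc.
have H5' : forall z, z < 2*n -> z <> val a -> z <> val b -> z <> val c ->
    S ((S ((z+1) %% (2*n)) + 1) %% (2*n)) = z.
  move=> z hz za zb zc.
  rewrite -(key z hz) -(key _ (ltn_ord _)) ptv H5 ?vpt //.
  1-3: apply/eqP => e; first [by apply: za; rewrite -e vpt | by apply: zb; rewrite -e vpt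
                            | by apply: zc; rewrite -e vpt].
have dab : val a <> val b by move=> /val_inj e; move: ab; rewrite e eqxx.
have dac : val a <> val c by move=> /val_inj e; move: ac; rewrite e eqxx.
have dbc : val b <> val c by move=> /val_inj e; move: bc; rewrite e eqxx.
have [h [k [hh hk hm hS]]] : exists h k, [/\ 1 <= h <= n-2, h < k < 2*n-h, h = k %[mod 2] &
     forall v, v < 2*n -> (S v).+1 = f0 n h k v.+1].
  have : (val b <= val a /\ val c <= val a) \/ (val c <= val b /\ val a <= val b) \/
         (val a <= val c /\ val b <= val c) by lia.
  case => [[h1 h2]|[[h1 h2]|[h1 h2]]].
  - exact: (@core n S (val a) (val b) (val c) n0 Sr S2 S3 S0 (ltn_ord a) (ltn_ord b) (ltn_ord c)
       dab dac dbc Ha Hb Hc H5' h1 h2).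
  - exact: (@core n S (val b) (val c) (val a) n0 Sr S2 S3 S0 (ltn_ord b) (ltn_ord c) (ltn_ord a)
       dbc (nesym dab) (nesym dac) Hb Hc Ha (fun z hz z1 z2 z3 => H5' z hz z3 z1 z2) h1 h2).
  - exact: (@core n S (val c) (val a) (val b) n0 Sr S2 S3 S0 (ltn_ord c) (ltn_ord a) (ltn_ord b)
       (nesym dac) (nesym dbc) dab Hc Ha Hb (fun z hz z1 z2 z3 => H5' z hz z2 z3 z1) h1 h2).
have h1 : 1 <= h by case/andP: hh.
have e2 : k - h = 2 * ((k-h)%/2) by lia.
have e3 : 2*n-h-k = 2 * ((2*n-h-k)%/2) by lia.
have s0P : s0 = P0 n h k.
  apply/permP => x; apply: (@lbl_inj (2*n)); rewrite P0_eval //.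
  by have := hS (val x) (ltn_ord x); rewrite /S ptv.
have phiP : phi = P1 n h k.
  have E := @P0sinfP1 n h k sinf h1 hk hm Hs; rewrite -s0P in E.
  apply/permP => y.
  pose w := s0^-1%g (sinf^-1%g y).
  have ey : y = sinf (s0 w) by rewrite /w !permKV.
  rewrite ey rel.
  have := congr1 (fun p : {perm 'I_(2*n)} => p w) E.
  by rewrite perm1 (permM (s0 * sinf)) (permM s0) => ->.
exists h, k; split => //.
move=> x; rewrite phiP; split.
  move=> e; apply/(@f1_fix n h k _ _ (lbl x) h1 hk e2 e3 (lbl_bound x)).
  by rewrite -P1_eval // e.
move=> H; apply: (@lbl_inj (2*n)); rewrite P1_eval //.
by apply/(@f1_fix n h k _ _ (lbl x) h1 hk e2 e3 (lbl_bound x)).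
Qed.

Lemma back n h k a b w (s0 sinf s1 : {perm 'I_(2*n)}) :
  1 <= h <= n-2 -> h < k < 2*n-h -> h = k %[mod 2] ->
  [\/ [/\ a = h, b = k & w = h], [/\ a = h, b = 2*n-h & w = 2*n-h] | [/\ a = k, b = 2*n-h & w = k]] ->
  s0 = P0 n h k -> s1 = (P1 n h k * tp a b)%g ->
  (forall x, lbl (sinf x) = (if lbl x == 1 then 2 * n else (lbl x).-1)) ->
  special_admissible n s0 sinf s1 (tp a b) /\ s0 = P0 n h k /\ (s1 * tp a b)%g = P1 n h k.
Proof.
move=> hh hk hm C e0 e1 Hs.
have h1 : 1 <= h by case/andP: hh.
have n0 : 0 < n by lia.
have e2 : k - h = 2 * ((k-h)%/2) by lia.
have e3 : 2*n-h-k = 2 * ((2*n-h-k)%/2) by lia.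
move: e2 e3; set m2 := (k-h)%/2; set m3 := (2*n-h-k)%/2 => e2 e3; clearbody m2 m3.
have ra : 0 < a <= 2*n by case: C => -[? ? ?]; lia.
have rb : 0 < b <= 2*n by case: C => -[? ? ?]; lia.
have nab : a != b by case: C => -[? ? ?]; lia.
have [u hu] := @lblpt (2*n) a ra.
have [v hv] := @lblpt (2*n) b rb.
have tuv : tp a b = tperm u v by apply: tp_tperm.
have uv : u != v by rewrite -lbl_eq hu hv.
have tt : (@tp (2*n) a b * tp a b = 1)%g by rewrite tuv tperm2.
have s1t : (s1 * tp a b = P1 n h k)%g by rewrite e1 -mulgA tt mulg1.
have s1E : forall x, lbl (s1 x) = tpf a b (f1 n h k (lbl x)).
  by move=> x; rewrite e1 permM lbl_tp // P1_eval.
have hk' := hk.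
case/andP: hk => hk k2.
split; last by split.
split; last first.
  split => // x hx.
  - apply: (@lbl_inj (2*n)); rewrite s1E hx.
    have [_ _ gf] := @g_props n h k m2 m3 a b w (2*n) h1 hk' e2 e3 C ltac:(lia).
    by apply/gf; left.
  - apply: (@lbl_inj (2*n)); rewrite lbl_tp // hx; case: C => -[? ? ?]; repeat ifdec; lia.
split.
- rewrite e0; apply: inv_pdt.
    move=> x; apply: (@lbl_inj (2*n)); rewrite !P0_eval //.
    by have [-> _ _] := @f0_props n h k m2 m3 (lbl x) h1 hk' e2 e3 (lbl_bound x).
  rewrite (_ : [set z | P0 n h k z != z] = setT) ?cardsT ?card_ord //.
  apply/setP => z; rewrite !inE -lbl_eq P0_eval //.
  by have [_ _ ->] := @f0_props n h k m2 m3 (lbl z) h1 hk' e2 e3 (lbl_bound z).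
- exact: kcycle_rot.
- apply: inv_pdt.
    move=> x; apply: (@lbl_inj (2*n)); rewrite !s1E.
    by have [-> _ _] := @g_props n h k m2 m3 a b w (lbl x) h1 hk' e2 e3 C (lbl_bound x).
  have F : [set z | s1 z != z] =
           ~: [set z : 'I_(2*n) | lbl z \in [:: 2*n; h+m2; k+m3; w]].
    apply/setP => z; rewrite !inE -lbl_eq s1E; congr negb.
    have [_ _ gf] := @g_props n h k m2 m3 a b w (lbl z) h1 hk' e2 e3 C (lbl_bound z).
    apply/eqP/idP => H.
      by move/gf: H; lia.
    by apply/gf; move: H; lia.
  have := cardsC [set z : 'I_(2*n) | lbl z \in [:: 2*n; h+m2; k+m3; w]].
  rewrite F card_ord card_lbl_in.
  all: try by rewrite /=; lia.
  all: try by rewrite /= !inE; case: C => -[? ? ?]; lia.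
  all: rewrite /=; try (set X := #|_|; clearbody X; move=> EX; clear -EX hh; lia).
  rewrite andbT; apply/and4P; split; try lia; case: C => -[? ? ?]; lia.
- by exists u; exists v.
- rewrite e0 e1 (mulgA (P0 n h k * sinf)%g (P1 n h k) (tp a b)).
  rewrite -(mulgA (P0 n h k * sinf * P1 n h k)%g (tp a b) (tp a b)) tt mulg1.
  exact: (@P0sinfP1 n h k sinf h1 hk' hm Hs).
Qed.

Lemma part2 n h k :
    1 <= h <= n - 2 -> h < k < 2 * n - h -> h = k %[mod 2] ->
    uniq [:: @tp (2 * n) h k; tp h (2 * n - h); tp k (2 * n - h)] /\
    forall s0 sinf s1 t : {perm 'I_(2 * n)},
      (special_admissible n s0 sinf s1 t /\ s0 = P0 n h k /\ (s1 * t)%g = P1 n h k) <->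
      [/\ t \in [:: tp h k; tp h (2 * n - h); tp k (2 * n - h)],
          s0 = P0 n h k, s1 = (P1 n h k * t)%g
        & forall x, lbl (sinf x) = (if lbl x == 1 then 2 * n else (lbl x).-1)].
Proof.
move=> hh hk hm.
have h1 : 1 <= h by case/andP: hh.
have e2 : k - h = 2 * ((k-h)%/2) by lia.
have e3 : 2*n-h-k = 2 * ((2*n-h-k)%/2) by lia.
have [pA hA] := @lblpt (2*n) (2*n-h) ltac:(lia).
have [pB hB] := @lblpt (2*n) h ltac:(lia).
have [pC hC] := @lblpt (2*n) k ltac:(lia).
have dAB : pA != pB by rewrite -lbl_eq hA hB; lia.
have dAC : pA != pC by rewrite -lbl_eq hA hC; lia.
have dBC : pB != pC by rewrite -lbl_eq hB hC; lia.
have dBA : pB != pA by rewrite eq_sym.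
have dCA : pC != pA by rewrite eq_sym.
have dCB : pC != pB by rewrite eq_sym.
have t1 : @tp (2*n) h k = tperm pB pC by apply: tp_tperm.
have t2 : @tp (2*n) h (2*n-h) = tperm pB pA by apply: tp_tperm.
have t3 : @tp (2*n) k (2*n-h) = tperm pC pA by apply: tp_tperm.
have [fA fB fC] := @f1_3 n h k _ _ h1 hk e2 e3.
have PA : P1 n h k pA = pB by apply: (@lbl_inj (2*n)); rewrite P1_eval // hA fA hB.
have PB : P1 n h k pB = pC by apply: (@lbl_inj (2*n)); rewrite P1_eval // hB fB hC.
have PC : P1 n h k pC = pA by apply: (@lbl_inj (2*n)); rewrite P1_eval // hC fC hA.
split.
  rewrite t1 t2 t3 /= !in_cons !in_nil !orbF andbT; apply/andP; split; first (apply/norP; split).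
  - apply/eqP => e; have := congr1 (fun p : {perm 'I_(2*n)} => p pC) e.
    by rewrite tpermR tpermD // => /eqP; rewrite (negbTE dBC).
  - apply/eqP => e; have := congr1 (fun p : {perm 'I_(2*n)} => p pB) e.
    by rewrite tpermL tpermD // => /eqP; rewrite eq_sym (negbTE dBC).
  - apply/eqP => e; have := congr1 (fun p : {perm 'I_(2*n)} => p pB) e.
    by rewrite tpermL tpermD // => /eqP; rewrite (negbTE dAB).
move=> s0 sinf s1 t; split.
  move=> [[[H0 Hinf H1 Ht Heq] [Hs Hs1 Ht2]] [e0 e1]].
  have [x [y [xy et]]] := Ht.
  have inv1 := @pdt_inv _ _ _ H1.
  have es1 : s1 = (P1 n h k * tperm x y)%g by rewrite -e1 et -mulgA tperm2 mulg1.
  split => //; last by rewrite et.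
  rewrite et t1 t2 t3 !in_cons in_nil orbF.
  case: (@trans_in _ (P1 n h k) s1 pA pB pC x y dAB dAC dBC PA PB PC xy inv1 es1) => ->.
  - by rewrite tpermC eqxx orbT.
  - by rewrite tpermC eqxx !orbT.
  - by rewrite eqxx.
move=> [tin e0 e1 Hs].
move: tin; rewrite !in_cons in_nil orbF => /or3P[/eqP et|/eqP et|/eqP et]; subst t.
- exact: (@back n h k h k h s0 sinf s1 hh hk hm ltac:(by apply: Or31) e0 e1 Hs).
- exact: (@back n h k h (2*n-h) (2*n-h) s0 sinf s1 hh hk hm ltac:(by apply: Or32) e0 e1 Hs).
- exact: (@back n h k k (2*n-h) k s0 sinf s1 hh hk hm ltac:(by apply: Or33) e0 e1 Hs).
Qed.


Theorem mainTheorem14 (n : nat) :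
  (forall s0 sinf s1 t : {perm 'I_(2 * n)},
    special_admissible n s0 sinf s1 t ->
    prod_disj_transp_3cycle (n - 3) (s1 * t)%g ->
    exists h k : nat,
      [/\ 1 <= h <= n - 2, h < k < 2 * n - h, h = k %[mod 2],
          s0 = P0 n h k /\ (s1 * t)%g = P1 n h k
        & forall x : 'I_(2 * n),
            (s1 * t)%g x = x <->
            (lbl x = 2 * n \/ lbl x = (k + h) %/ 2 \/ lbl x = (2 * n - h + k) %/ 2)])
  /\
  (forall h k : nat,
    1 <= h <= n - 2 -> h < k < 2 * n - h -> h = k %[mod 2] ->
    uniq [:: @tp (2 * n) h k; tp h (2 * n - h); tp k (2 * n - h)] /\
    forall s0 sinf s1 t : {perm 'I_(2 * n)},
      (special_admissible n s0 sinf s1 t /\ s0 = P0 n h k /\ (s1 * t)%g = P1 n h k) <->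
      [/\ t \in [:: tp h k; tp h (2 * n - h); tp k (2 * n - h)],
          s0 = P0 n h k, s1 = (P1 n h k * t)%g
        & forall x, lbl (sinf x) = (if lbl x == 1 then 2 * n else (lbl x).-1)]).
Proof.
split.
  by move=> s0 sinf s1 t; apply: part1.
by move=> h k; apply: part2.
Qed.
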